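(* Assume the Framework and the Purification Postulate. Let $\{\rho_i\}_{i\in X}$ be a preparation-test for system $\mathrm A$ (a test from $\mathrm I$ to $\mathrm A$), let $\rho:=\sum_{i\in X}\rho_i$, and let $\Psi\in\mathfrak S_1(\mathrm A\mathrm B)$ be any purification of $\rho$. Then there is an observation-test $\{b_i\}_{i\in X}$ on $\mathrm B$ (a test from $\mathrm B$ to $\mathrm I$) such that $\rho_i=(\mathcal I_{\mathrm A}\otimes b_i)\Psi$ for every $i\in X$. Moreover, the purifying system $\mathrm B$ and the purification $\Psi$ can be chosen such that the observation-test $\{b_i\}_{i\in X}$ with this property is discriminating, i.e. there are normalized states $\{\sigma_i\}_{i\in X}\subseteq\mathfrak S_1(\mathrm B)$ with $(b_j|\sigma_i)=\delta_{ij}$.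
   Context: Framework. We work in an operational-probabilistic theory: there is a collection of systems $\mathrm A,\mathrm B,\dots$, closed under a composition $\mathrm A\mathrm B$ (associative, symmetric up to a reversible swap, with a trivial system $\mathrm I$ satisfying $\mathrm A\mathrm I=\mathrm A$); for each pair of systems a set $\mathfrak T(\mathrm A,\mathrm B)$ of transformations; a test from $\mathrm A$ to $\mathrm B$ is a finite collection $\{\mathcal C_i\}_{i\in X}\subseteq\mathfrak T(\mathrm A,\mathrm B)$, and every transformation belongs to some test. Tests are closed under sequential composition, parallel composition ($\otimes$), coarse-graining (summing outcomes over the blocks of a partition of $X$) and conditioning (choosing the next test depending on the outcome of the previous one). States of $\mathrm A$ are the elements of $\mathfrak S(\mathrm A):=\mathfrak T(\mathrm I,\mathrm A)$, effects are the elements of $\mathfrak T(\mathrm A,\mathrm I)$, and transformations $\mathrm I\to\mathrm I$ are probabilities in $[0,1]$ (those of a test sum to $1$; composition is multiplication). An effect $a$ and a state $\rho$ give the probability $(a|\rho)$. States (effects) are identified when they give equal probabilities on all effects (states); transformations $\mathcal C,\mathcal C'$ are identified when $\mathcal C\otimes\mathcal I_{\mathrm S}$ and $\mathcal C'\otimes\mathcal I_{\mathrm S}$ act identically on all states of $\mathrm A\mathrm S$ for every system $\mathrm S$. States span a finite-dimensional real vector space $\mathfrak S_{\mathbb R}(\mathrm A)$, transformations act linearly, and $\mathfrak T_{\mathbb R}(\mathrm A,\mathrm B)$ is the real span of $\mathfrak T(\mathrm A,\mathrm B)$. Standing assumptions: (i) causality: each system $\mathrm A$ has a unique deterministic effect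 $e_{\mathrm A}$ (the effect forming a one-outcome observation test), and $e_{\mathrm A\mathrm B}=e_{\mathrm A}\otimes e_{\mathrm B}$; (ii) local discriminability: if two states of $\mathrm A\mathrm B$ differ, some product effect $a\otimes b$ gives them different probabilities; (iii) all sets of states are closed, the theory is not deterministic (hence all sets of states, effects and transformations are convex), and perfectly distinguishable states exist. A state $\rho$ is normalized if $(e|\rho)=1$; $\mathfrak S_1(\mathrm A)$ is the set of normalized states. A channel is a $\mathcal C\in\mathfrak T(\mathrm A,\mathrm B)$ with $e_{\mathrm B}\circ\mathcal C=e_{\mathrm A}$. A channel $\mathcal U\in\mathfrak T(\mathrm A,\mathrm B)$ is reversible if some channel $\mathcal W\in\mathfrak T(\mathrm B,\mathrm A)$ satisfies $\mathcal W\mathcal U=\mathcal I_{\mathrm A}$, $\mathcal U\mathcal W=\mathcal I_{\mathrm B}$; $\mathbf G_{\mathrm A}$ is the group of reversible channels on $\mathrm A$. The marginal of a state $\sigma$ of $\mathrm A\mathrm B$ on $\mathrm A$ is $(\mathcal I_{\mathrm A}\otimes e_{\mathrm B})\sigma$. Refinement. For $\mathcal C\in\mathfrak T(\mathrm A,\mathrm B)$, write $\mathcal D\prec\mathcal C$ if there are a test $\{\mathcal D_j\}_{j\in Y}$ and $Y_0\subseteq Y$ with $\mathcal C=\sum_{j\in Y_0}\mathcal D_j$ and $\mathcal D\in\{\mathcal D_j\}_{j\in Y_0}$; the refinement set is $D_{\mathcal C}=\{\mathcal D:\mathcal D\prec\mathcal C\}$. $\mathcal C$ is atomic if $\mathcal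 D\prec\mathcal C$ implies $\mathcal D=\lambda\mathcal C$ for some $\lambda\in[0,1]$. A pure state is an atomic state; a state is mixed otherwise. Purification Postulate. For every $\rho\in\mathfrak S_1(\mathrm A)$ there are a system $\mathrm B$ and a pure $\Psi\in\mathfrak S_1(\mathrm A\mathrm B)$ with $(\mathcal I_{\mathrm A}\otimes e_{\mathrm B})\Psi=\rho$ (a purification of $\rho$, with purifying system $\mathrm B$); and if $\Psi,\Psi'\in\mathfrak S_1(\mathrm A\mathrm B)$ are purifications of the same state, then $\Psi'=(\mathcal I_{\mathrm A}\otimes\mathcal U)\Psi$ for some $\mathcal U\in\mathbf G_{\mathrm B}$. *)

(* Defs.v *)
(* An operational-probabilistic theory (OPT) is
   modelled abstractly: [OPTData] packages the data, [OPTAxioms] the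
   Framework (with the standing assumptions (i)-(iii)), and
   [PurificationPostulate] the postulate. *)
From Stdlib Require Import Reals.
From mathcomp Require Import ssreflect ssrfun ssrbool eqtype ssrnat seq choice fintype.

Set Implicit Arguments.
Unset Strict Implicit.

Local Open Scope R_scope.

(* Data of an OPT.  [TR A B] is the real span T_R(A,B) of the
   transformations from A to B (already quotiented by the operational
   identification); [isTrans] carves out the actual transformations
   T(A,B); [isTest f] says that the finite family [f] indexed by the
   outcome set [X] is a test.  States are [TR sI A], effects [TR A sI],
   probabilities [TR sI sI] (identified with reals through [prob]).     *)
Record OPTData := {
  Sys : Type;
  sI : Sys;
  sprod : Sys -> Sys -> Sys;
  unitR : forall A, sprod A sI = A;
  unitL : forall A, sprod sI A = A;
  assocS : forall A B C, sprod (sprod A B) C = sprod A (sprod B C);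
  TR : Sys -> Sys -> Type;
  tzero : forall A B, TR A B;
  tadd : forall A B, TR A B -> TR A B -> TR A B;
  tscal : forall A B, R -> TR A B -> TR A B;
  tcomp : forall A B C, TR B C -> TR A B -> TR A C;   (* tcomp D C = D C *)
  tid : forall A, TR A A;
  tpar : forall A B C D, TR A B -> TR C D -> TR (sprod A C) (sprod B D);
  tswap : forall A B, TR (sprod A B) (sprod B A);
  prob : TR sI sI -> R;
  deff : forall A, TR A sI;
  isTrans : forall A B, TR A B -> Prop;
  isTest : forall A B (X : finType), (X -> TR A B) -> Prop
}.

Arguments sI {o}.
Arguments sprod {o}.
Arguments unitR {o}.
Arguments unitL {o}.
Arguments assocS {o}.
Arguments TR {o}.
Arguments tzero {o A B}.
Arguments tadd {o A B}.
Arguments tscal {o A B}.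
Arguments tcomp {o A B C}.
Arguments tid {o}.
Arguments tpar {o A B C D}.
Arguments tswap {o}.
Arguments prob {o}.
Arguments deff {o}.
Arguments isTrans {o A B}.
Arguments isTest {o A B X}.

Section Defs.
Variable T : OPTData.

Definition castC {A B B' : Sys T} (e : B = B') (f : TR A B) : TR A B' :=
  match e in _ = B' return TR A B' with erefl => f end.
Definition castD {A A' B : Sys T} (e : A = A') (f : TR A B) : TR A' B :=
  match e in _ = A' return TR A' B with erefl => f end.

Definition tsum {A B : Sys T} {X : finType} (P : pred X) (f : X -> TR A B) :
  TR A B := foldr (fun x acc => tadd (f x) acc) tzero [seq x <- enum X | P x].

Definition rsum {X : finType} (g : X -> R) : R :=
  foldr (fun x acc => g x + acc) 0 (enum X).

Definition pairing {A : Sys T} (a : TR A sI) (rho : TR sI A) : R :=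
  prob (tcomp a rho).

(* (I_A (x) b) Psi, viewed (via A I = A) as an element of T_R(I,A) *)
Definition applyB {A B : Sys T} (b : TR B sI) (Psi : TR sI (sprod A B)) :
  TR sI A := castC (unitR A) (tcomp (tpar (tid A) b) Psi).

Definition marginal {A B : Sys T} (Psi : TR sI (sprod A B)) : TR sI A :=
  applyB (deff B) Psi.

Definition normalized {A : Sys T} (rho : TR sI A) : Prop :=
  isTrans rho /\ pairing (deff A) rho = 1.

Definition isChannel {A B : Sys T} (C : TR A B) : Prop :=
  isTrans C /\ tcomp (deff B) C = deff A.

Definition reversible {A B : Sys T} (U : TR A B) : Prop :=
  isChannel U /\ exists W : TR B A,
    isChannel W /\ tcomp W U = tid A /\ tcomp U W = tid B.

Definition refines {A B : Sys T} (D C : TR A B) : Prop :=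
  exists (Y : finType) (f : Y -> TR A B) (Y0 : pred Y),
    isTest f /\ C = tsum Y0 f /\ exists j, Y0 j /\ D = f j.

Definition atomic {A B : Sys T} (C : TR A B) : Prop :=
  forall D, refines D C -> exists l, 0 <= l <= 1 /\ D = tscal l C.

Definition pure {A : Sys T} (rho : TR sI A) : Prop := isTrans rho /\ atomic rho.

Definition isPurification {A B : Sys T} (rho : TR sI A)
  (Psi : TR sI (sprod A B)) : Prop :=
  normalized Psi /\ pure Psi /\ marginal Psi = rho.

End Defs.

Arguments castC {T A B B'}.
Arguments castD {T A A' B}.
Arguments tsum {T A B X}.
Arguments rsum {X}.
Arguments pairing {T A}.
Arguments applyB {T A B}.
Arguments marginal {T A B}.
Arguments normalized {T A}.
Arguments isChannel {T A B}.
Arguments reversible {T A B}.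
Arguments refines {T A B}.
Arguments atomic {T A B}.
Arguments pure {T A}.
Arguments isPurification {T A B}.

Record OPTAxioms (T : OPTData) : Prop := {
  ax_add_assoc : forall (A B : Sys T) (x y z : TR A B), tadd x (tadd y z) = tadd (tadd x y) z;
  ax_add_comm : forall (A B : Sys T) (x y : TR A B), tadd x y = tadd y x;
  ax_add0 : forall (A B : Sys T) (x : TR A B), tadd tzero x = x;
  ax_addN : forall (A B : Sys T) (x : TR A B), tadd x (tscal (-1) x) = tzero;
  ax_scal1 : forall (A B : Sys T) (x : TR A B), tscal 1 x = x;
  ax_scal_mul : forall (A B : Sys T) (r s : R) (x : TR A B), tscal r (tscal s x) = tscal (r * s) x;
  ax_scal_addr : forall (A B : Sys T) (r s : R) (x : TR A B),
      tscal (r + s) x = tadd (tscal r x) (tscal s x);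
  ax_scal_addv : forall (A B : Sys T) r (x y : TR A B),
      tscal r (tadd x y) = tadd (tscal r x) (tscal r y);
  ax_comp_assoc : forall (A B C D : Sys T) (f : TR A B) (g : TR B C) (h : TR C D),
      tcomp h (tcomp g f) = tcomp (tcomp h g) f;
  ax_comp_idl : forall (A B : Sys T) (f : TR A B), tcomp (tid B) f = f;
  ax_comp_idr : forall (A B : Sys T) (f : TR A B), tcomp f (tid A) = f;
  ax_comp_addl : forall (A B C : Sys T) (g g' : TR B C) (f : TR A B),
      tcomp (tadd g g') f = tadd (tcomp g f) (tcomp g' f);
  ax_comp_addr : forall (A B C : Sys T) (g : TR B C) (f f' : TR A B),
      tcomp g (tadd f f') = tadd (tcomp g f) (tcomp g f');
  ax_comp_scall : forall (A B C : Sys T) r (g : TR B C) (f : TR A B),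
      tcomp (tscal r g) f = tscal r (tcomp g f);
  ax_comp_scalr : forall (A B C : Sys T) r (g : TR B C) (f : TR A B),
      tcomp g (tscal r f) = tscal r (tcomp g f);
  ax_par_addl : forall (A B C D : Sys T) (f f' : TR A B) (g : TR C D),
      tpar (tadd f f') g = tadd (tpar f g) (tpar f' g);
  ax_par_addr : forall (A B C D : Sys T) (f : TR A B) (g g' : TR C D),
      tpar f (tadd g g') = tadd (tpar f g) (tpar f g');
  ax_par_scall : forall (A B C D : Sys T) r (f : TR A B) (g : TR C D),
      tpar (tscal r f) g = tscal r (tpar f g);
  ax_par_scalr : forall (A B C D : Sys T) r (f : TR A B) (g : TR C D),
      tpar f (tscal r g) = tscal r (tpar f g);
  ax_par_comp : forall (A B C A' B' C' : Sys T) (f : TR A B) (g : TR B C)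
      (f' : TR A' B') (g' : TR B' C'),
      tpar (tcomp g f) (tcomp g' f') = tcomp (tpar g g') (tpar f f');
  ax_par_id : forall (A B : Sys T), tpar (tid A) (tid B) = tid (sprod A B);
  ax_par_assoc : forall (A B C D E F : Sys T) (f : TR A B) (g : TR C D) (h : TR E F),
      castD (assocS A C E) (castC (assocS B D F) (tpar (tpar f g) h))
      = tpar f (tpar g h);
  ax_par_scalar_r : forall (A B : Sys T) (f : TR A B) (p : TR (@sI T) (@sI T)),
      castD (unitR A) (castC (unitR B) (tpar f p)) = tscal (prob p) f;
  ax_par_scalar_l : forall (A B : Sys T) (f : TR A B) (p : TR (@sI T) (@sI T)),
      castD (unitL A) (castC (unitL B) (tpar p f)) = tscal (prob p) f;
  ax_swap_nat : forall (A B C D : Sys T) (f : TR A B) (g : TR C D),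
      tcomp (tswap B D) (tpar f g) = tcomp (tpar g f) (tswap A C);
  ax_swap_inv : forall (A B : Sys T), tcomp (tswap B A) (tswap A B) = tid (sprod A B);
  ax_prob_inj : forall p q : TR (@sI T) (@sI T), prob p = prob q -> p = q;
  ax_prob_surj : forall r : R, exists p : TR (@sI T) (@sI T), prob p = r;
  ax_prob_add : forall p q : TR (@sI T) (@sI T), prob (tadd p q) = prob p + prob q;
  ax_prob_scal : forall r (p : TR (@sI T) (@sI T)), prob (tscal r p) = r * prob p;
  ax_prob_id : prob (tid (@sI T)) = 1;
  ax_prob_comp : forall p q : TR (@sI T) (@sI T), prob (tcomp p q) = prob p * prob q;
  ax_prob_trans : forall p : TR (@sI T) (@sI T), isTrans p <-> 0 <= prob p <= 1;
  ax_prob_test : forall (X : finType) (f : X -> TR (@sI T) (@sI T)),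
      isTest f -> rsum (fun x => prob (f x)) = 1;
  ax_trans_test : forall (A B : Sys T) (C : TR A B),
      isTrans C <-> exists (X : finType) (f : X -> TR A B) (x : X),
                      isTest f /\ f x = C;
  ax_test_id : forall (A : Sys T), isTest (fun _ : unit => tid A);
  ax_test_swap : forall (A B : Sys T), isTest (fun _ : unit => tswap A B);
  ax_test_cond : forall (A B C : Sys T) (X : finType) (Y : X -> finType)
      (f : X -> TR A B) (g : forall x, Y x -> TR B C),
      isTest f -> (forall x, isTest (g x)) ->
      isTest (fun p : {x : X & Y x} => tcomp (g (tag p) (tagged p)) (f (tag p)));
  ax_test_par : forall (A B C D : Sys T) (X Y : finType) (f : X -> TR A B) (g : Y -> TR C D),
      isTest f -> isTest g -> isTest (fun p : X * Y => tpar (f p.1) (g p.2));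
  ax_test_coarse : forall (A B : Sys T) (X Y : finType) (f : X -> TR A B) (h : X -> Y),
      isTest f -> (forall y, exists x, h x = y) ->
      isTest (fun y => tsum (fun x => h x == y) f);
  ax_test_convex : forall (A B : Sys T) (X : finType) (f g : X -> TR A B) (p : R),
      isTest f -> isTest g -> 0 <= p <= 1 ->
      isTest (fun x => tadd (tscal p (f x)) (tscal (1 - p) (g x)));
  ax_deff_test : forall (A : Sys T), isTest (fun _ : unit => deff A);
  ax_deff_unique : forall (A : Sys T) (a : unit -> TR A (@sI T)), isTest a -> a tt = deff A;
  ax_deff_prod : forall (A B : Sys T),
      deff (sprod A B) = castC (unitR (@sI T)) (tpar (deff A) (deff B));
  ax_state_ext : forall (A : Sys T) (rho rho' : TR (@sI T) A),
      (forall a : TR A (@sI T), isTrans a -> pairing a rho = pairing a rho') -> rho = rho';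
  ax_effect_ext : forall (A : Sys T) (a a' : TR A (@sI T)),
      (forall rho : TR (@sI T) A, isTrans rho -> pairing a rho = pairing a' rho) -> a = a';
  ax_trans_ext : forall (A B : Sys T) (C C' : TR A B),
      (forall S (psi : TR (@sI T) (sprod A S)), isTrans psi ->
         tcomp (tpar C (tid S)) psi = tcomp (tpar C' (tid S)) psi) -> C = C';
  ax_span : forall (A B : Sys T) (x : TR A B), exists (n : nat) (r : 'I_n -> R) (C : 'I_n -> TR A B),
      (forall i, isTrans (C i)) /\ x = tsum predT (fun i => tscal (r i) (C i));
  ax_findim : forall (A : Sys T), exists (n : nat) (v : 'I_n -> TR (@sI T) A),
      forall x : TR (@sI T) A, exists r : 'I_n -> R, x = tsum predT (fun i => tscal (r i) (v i));
  ax_local_discr : forall (A B : Sys T) (s s' : TR (@sI T) (sprod A B)), isTrans s -> isTrans s' ->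
      (forall (a : TR A (@sI T)) (b : TR B (@sI T)), isTrans a -> isTrans b ->
         prob (castC (unitR (@sI T)) (tcomp (tpar a b) s))
         = prob (castC (unitR (@sI T)) (tcomp (tpar a b) s'))) -> s = s';
  ax_closed : forall (A : Sys T) (rhon : nat -> TR (@sI T) A) (rho : TR (@sI T) A),
      (forall n, isTrans (rhon n)) ->
      (forall a : TR A (@sI T), isTrans a ->
         Un_cv (fun n => pairing a (rhon n)) (pairing a rho)) ->
      isTrans rho;
  ax_perf_dist : exists (A : Sys T) (rho : bool -> TR (@sI T) A) (a : bool -> TR A (@sI T)),
      (forall i, normalized (rho i)) /\ isTest a /\
      forall i j, pairing (a j) (rho i) = if i == j then 1 else 0
}.

Definition PurificationPostulate (T : OPTData) : Prop :=
  (forall (A : Sys T) (rho : TR sI A), normalized rho ->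
     exists (B : Sys T) (Psi : TR sI (sprod A B)), isPurification rho Psi) /\
  (forall (A B : Sys T) (Psi Psi' : TR sI (sprod A B)),
     (exists rho : TR sI A, isPurification rho Psi /\ isPurification rho Psi') ->
     exists U : TR B B, reversible U /\ Psi' = tcomp (tpar (tid A) U) Psi).

(* Main.v *)
From HB Require Import structures.
Require Import Defs.
From Stdlib Require Import Reals Lra ProofIrrelevance FunctionalExtensionality.
From mathcomp Require Import ssreflect ssrfun ssrbool eqtype ssrnat seq choice fintype bigop.

Set Implicit Arguments.
Unset Strict Implicit.
Local Open Scope R_scope.

Section Dev.
Variable T : OPTData.
Hypothesis HT : OPTAxioms T.

Local Notation Sy := (Sys T).
Local Notation I := (@sI T).

Lemma tA (A B : Sy) : associative (@tadd T A B).
Proof. move=> x y z; exact: (ax_add_assoc HT). Qed.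
Lemma tC (A B : Sy) : commutative (@tadd T A B).
Proof. move=> x y; exact: (ax_add_comm HT). Qed.
Lemma t0 (A B : Sy) : left_id (@tzero T A B) (@tadd T A B).
Proof. move=> x; exact: (ax_add0 HT). Qed.
HB.instance Definition _ (A B : Sy) :=
  Monoid.isComLaw.Build (TR A B) (@tzero T A B) (@tadd T A B) (@tA A B) (@tC A B) (@t0 A B).

Lemma rA : associative Rplus. Proof. move=> x y z; lra. Qed.
Lemma rC : commutative Rplus. Proof. move=> x y; lra. Qed.
Lemma r0 : left_id 0 Rplus. Proof. move=> x; lra. Qed.
HB.instance Definition _ := Monoid.isComLaw.Build R 0 Rplus rA rC r0.

Lemma addr0 (A B : Sy) (x : TR A B) : tadd x tzero = x.
Proof. by rewrite tC t0. Qed.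

Lemma addNr (A B : Sy) (x : TR A B) : tadd (tscal (-1) x) x = tzero.
Proof. by rewrite tC (ax_addN HT). Qed.

Lemma addKr (A B : Sy) (x y : TR A B) : tadd (tscal (-1) x) (tadd x y) = y.
Proof. by rewrite tA addNr t0. Qed.

Lemma addIr (A B : Sy) (x y z : TR A B) : tadd x y = tadd x z -> y = z.
Proof. move=> h; by rewrite -(addKr x y) h addKr. Qed.

Lemma scal0 (A B : Sy) (x : TR A B) : tscal 0 x = tzero.
Proof.
apply: (@addIr _ _ (tscal 0 x)); rewrite addr0 -(ax_scal_addr HT).
by rewrite Rplus_0_r.
Qed.

Lemma scal1 (A B : Sy) (x : TR A B) : tscal 1 x = x.
Proof. exact: (ax_scal1 HT). Qed.

Lemma scalr0 (A B : Sy) r : tscal r (@tzero T A B) = tzero.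
Proof. by rewrite -(scal0 tzero) (ax_scal_mul HT) Rmult_0_r. Qed.

Lemma comp0r (A B C : Sy) (g : TR B C) : tcomp g (@tzero T A B) = tzero.
Proof. by rewrite -(scal0 tzero) (ax_comp_scalr HT) scal0. Qed.
Lemma comp0l (A B C : Sy) (f : TR A B) : tcomp (@tzero T B C) f = tzero.
Proof. by rewrite -(scal0 tzero) (ax_comp_scall HT) scal0. Qed.
Lemma par0l (A B C D : Sy) (g : TR C D) : tpar (@tzero T A B) g = tzero.
Proof. by rewrite -(scal0 tzero) (ax_par_scall HT) scal0. Qed.
Lemma par0r (A B C D : Sy) (f : TR A B) : tpar f (@tzero T C D) = tzero.
Proof. by rewrite -(scal0 tzero) (ax_par_scalr HT) scal0. Qed.
Lemma prob0 : prob (@tzero T I I) = 0.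
Proof. by rewrite -(scal0 tzero) (ax_prob_scal HT) Rmult_0_l. Qed.

Lemma tsumE (A B : Sy) (X : finType) (P : pred X) (f : X -> TR A B) :
  tsum P f = \big[tadd/tzero]_(x | P x) f x.
Proof.
rewrite /tsum -big_filter /index_enum; rewrite -enumT.
by elim: [seq x <- enum X | P x] => [|x s IH]; rewrite ?big_nil ?big_cons //= IH.
Qed.

Lemma rsumE (X : finType) (g : X -> R) : rsum g = \big[Rplus/0]_x g x.
Proof.
rewrite /rsum /index_enum -enumT.
by elim: (enum X) => [|x s IH]; rewrite ?big_nil ?big_cons //= IH.
Qed.


Definition cst (A B : Sy) (e : A = B) : TR A B := castC e (tid A).

Lemma castCE (A B B' : Sy) (e : B = B') (f : TR A B) : castC e f = tcomp (cst e) f.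
Proof. by case: _ / e; rewrite /cst /= (ax_comp_idl HT). Qed.
Lemma castDE (A A' B : Sy) (e : A = A') (f : TR A B) : castD e f = tcomp f (cst (esym e)).
Proof. by case: _ / e; rewrite /cst /= (ax_comp_idr HT). Qed.
Lemma cst_refl (A : Sy) (e : A = A) : cst e = tid A.
Proof. by rewrite (proof_irrelevance _ e erefl). Qed.
Lemma cst_pi (A B : Sy) (e1 e2 : A = B) : cst e1 = cst e2.
Proof. by rewrite (proof_irrelevance _ e1 e2). Qed.
Lemma cstK (A B C : Sy) (e1 : A = B) (e2 : B = C) (e3 : A = C) :
  tcomp (cst e2) (cst e1) = cst e3.
Proof.
case: _ / e2 e3 => e3; rewrite (cst_pi e3 e1) /cst /=.
by rewrite (ax_comp_idl HT).
Qed.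
Lemma cstKr (A B C D : Sy) (e1 : A = B) (e2 : B = C) (e3 : A = C) (f : TR D A) :
  tcomp (cst e2) (tcomp (cst e1) f) = tcomp (cst e3) f.
Proof. by rewrite (ax_comp_assoc HT) (cstK _ _ e3). Qed.
Lemma cst_inv (A B : Sy) (e : A = B) (e' : B = A) : tcomp (cst e') (cst e) = tid A.
Proof. by rewrite (cstK _ _ erefl). Qed.
Lemma cst_invr (A B D : Sy) (e : A = B) (e' : B = A) (f : TR D A) :
  tcomp (cst e') (tcomp (cst e) f) = f.
Proof. by rewrite (ax_comp_assoc HT) cst_inv (ax_comp_idl HT). Qed.
Lemma cst_par (A B C D : Sy) (e1 : A = B) (e2 : C = D) (e3 : sprod A C = sprod B D) :
  tpar (cst e1) (cst e2) = cst e3.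
Proof.
subst B D; rewrite (cst_refl e3) /cst /= (ax_par_id HT) //.
Qed.

Lemma test_ext (A B : Sy) (X : finType) (f g : X -> TR A B) :
  (forall x, f x = g x) -> isTest f -> isTest g.
Proof. by move=> h; rewrite (functional_extensionality _ _ h). Qed.

Lemma test_reindex (A B : Sy) (X Y : finType) (f : X -> TR A B) (g : Y -> X) (h : X -> Y) :
  cancel g h -> cancel h g -> isTest f -> isTest (fun y => f (g y)).
Proof.
move=> gK hK Hf.
have := ax_test_coarse HT (h := h) Hf (fun y => ex_intro _ (g y) (gK y)).
apply: test_ext => y; rewrite tsumE (big_pred1 (g y)) // => x /=.
apply/eqP/eqP => [<-|->] //.
Qed.

Lemma test_seq (A B C : Sy) (X Y : finType) (f : X -> TR A B) (g : Y -> TR B C) :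
  isTest f -> isTest g -> isTest (fun p : X * Y => tcomp (g p.2) (f p.1)).
Proof.
move=> Hf Hg.
have := ax_test_cond HT (Y := fun _ => Y) (g := fun x => g) Hf (fun _ => Hg).
move/(test_reindex (g := fun p : X * Y => existT (fun _ => Y) p.1 p.2)
                   (h := fun s : {x : X & Y} => (tag s, tagged s))).
by apply; [case | case].
Qed.

Definition det (A B : Sy) (V : TR A B) := isTest (fun _ : unit => V).

Lemma det_trans (A B : Sy) (V : TR A B) : det V -> isTrans V.
Proof. move=> h; apply/(ax_trans_test HT); by exists unit, (fun _ => V), tt. Qed.

Lemma test_trans (A B : Sy) (X : finType) (f : X -> TR A B) x : isTest f -> isTrans (f x).
Proof. move=> h; apply/(ax_trans_test HT); by exists X, f, x. Qed.

Lemma test_detl (A B C : Sy) (X : finType) (f : X -> TR A B) (V : TR B C) :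
  isTest f -> det V -> isTest (fun x => tcomp V (f x)).
Proof.
move=> Hf HV; move: (test_seq Hf HV).
move/(test_reindex (g := fun x : X => (x, tt)) (h := fun p : X * unit => p.1)).
by apply => //; case=> ? [].
Qed.

Lemma test_detr (A B C : Sy) (X : finType) (f : X -> TR B C) (V : TR A B) :
  det V -> isTest f -> isTest (fun x => tcomp (f x) V).
Proof.
move=> HV Hf; move: (test_seq HV Hf).
move/(test_reindex (g := fun x : X => (tt, x)) (h := fun p : unit * X => p.2)).
by apply => //; case=> [[]] ?.
Qed.

Lemma test_par_detr (A B C D : Sy) (X : finType) (f : X -> TR A B) (V : TR C D) :
  isTest f -> det V -> isTest (fun x => tpar (f x) V).
Proof.
move=> Hf HV; move: (ax_test_par HT Hf HV).
move/(test_reindex (g := fun x : X => (x, tt)) (h := fun p : X * unit => p.1)).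
by apply => //; case=> ? [].
Qed.

Lemma test_par_detl (A B C D : Sy) (X : finType) (f : X -> TR C D) (V : TR A B) :
  det V -> isTest f -> isTest (fun x => tpar V (f x)).
Proof.
move=> HV Hf; move: (ax_test_par HT HV Hf).
move/(test_reindex (g := fun x : X => (tt, x)) (h := fun p : unit * X => p.2)).
by apply => //; case=> [[]] ?.
Qed.

Lemma det_comp (A B C : Sy) (V : TR A B) (W : TR B C) : det V -> det W -> det (tcomp W V).
Proof. move=> h1 h2; exact: (test_detl h1 h2). Qed.
Lemma det_par (A B C D : Sy) (V : TR A B) (W : TR C D) : det V -> det W -> det (tpar V W).
Proof. move=> h1 h2; exact: (test_par_detr h1 h2). Qed.
Lemma det_id (A : Sy) : det (tid A).
Proof. exact: (ax_test_id HT). Qed.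
Lemma det_cst (A B : Sy) (e : A = B) : det (cst e).
Proof. case: _ / e; exact: det_id. Qed.
Lemma det_deff (A : Sy) : det (deff A).
Proof. exact: (ax_deff_test HT). Qed.
Lemma det_swap (A B : Sy) : det (tswap A B).
Proof. exact: (ax_test_swap HT). Qed.

Lemma test_sum_deff (A : Sy) (X : finType) (a : X -> TR A I) (x0 : X) :
  isTest a -> tsum predT a = deff A.
Proof.
move=> Ha.
have := ax_test_coarse HT (h := fun _ => tt) Ha (fun y => ex_intro _ x0 (match y with tt => erefl end)).
move/(ax_deff_unique HT) => <-; rewrite !tsumE; apply: eq_bigl => x //.
Qed.

Lemma det_channel (A B : Sy) (V : TR A B) : det V -> tcomp (deff B) V = deff A.
Proof. move=> h; exact: (ax_deff_unique HT (a := fun _ => tcomp (deff B) V) (det_comp h (det_deff B))). Qed.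

Lemma tsum_map (A B C D : Sy) (X : finType) (P : pred X) (f : X -> TR A B) (L : TR A B -> TR C D) :
  (forall x y, L (tadd x y) = tadd (L x) (L y)) -> L tzero = tzero ->
  L (tsum P f) = tsum P (fun x => L (f x)).
Proof. move=> h1 h0; rewrite !tsumE; exact: (big_morph L h1 h0). Qed.

Lemma prob_tsum (X : finType) (P : pred X) (f : X -> TR I I) :
  prob (tsum P f) = \big[Rplus/0]_(x | P x) prob (f x).
Proof. rewrite tsumE; apply: (big_morph (@prob T) (ax_prob_add HT) prob0). Qed.

Lemma pairing_range (A : Sy) (a : TR A I) (r : TR I A) : isTrans a -> isTrans r ->
  0 <= pairing a r <= 1.
Proof.
move=> /(ax_trans_test HT) [X [f [x [Hf <-]]]] /(ax_trans_test HT) [Y [g [y [Hg <-]]]].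
apply/(ax_prob_trans HT).
exact: (test_trans (y, x) (test_seq Hg Hf)).
Qed.


Lemma cstKT (A B C D : Sy) (e1 : A = B) (e2 : B = C) (f : TR D A) :
  tcomp (cst e2) (tcomp (cst e1) f) = tcomp (cst (etrans e1 e2)) f.
Proof. exact: cstKr. Qed.
Lemma cstK2 (A B C : Sy) (e1 : A = B) (e2 : B = C) :
  tcomp (cst e2) (cst e1) = cst (etrans e1 e2).
Proof. exact: cstK. Qed.
Lemma compA' (A B C D : Sy) (f : TR A B) (g : TR B C) (h : TR C D) :
  tcomp (tcomp h g) f = tcomp h (tcomp g f).
Proof. by rewrite (ax_comp_assoc HT). Qed.
Lemma compidl (A B : Sy) (f : TR A B) : tcomp (tid B) f = f.
Proof. exact: (ax_comp_idl HT). Qed.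
Lemma compidr (A B : Sy) (f : TR A B) : tcomp f (tid A) = f.
Proof. exact: (ax_comp_idr HT). Qed.
Lemma scalcl (A B C : Sy) r (g : TR B C) (f : TR A B) : tcomp (tscal r g) f = tscal r (tcomp g f).
Proof. exact: (ax_comp_scall HT). Qed.
Lemma scalcr (A B C : Sy) r (g : TR B C) (f : TR A B) : tcomp g (tscal r f) = tscal r (tcomp g f).
Proof. exact: (ax_comp_scalr HT). Qed.
Lemma parC (A B C A' B' C' : Sy) (f : TR A B) (g : TR B C) (f' : TR A' B') (g' : TR B' C') :
  tcomp (tpar g g') (tpar f f') = tpar (tcomp g f) (tcomp g' f').
Proof. by rewrite (ax_par_comp HT). Qed.

Ltac norm := repeat progress rewrite ?compA' ?scalcl ?scalcr ?cstKT ?cstK2 ?cst_refl ?compidl ?compidr.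

Lemma par_scal_r (A B : Sy) (f : TR A B) (p : TR I I) :
  tpar f p = tscal (prob p) (tcomp (cst (esym (unitR B))) (tcomp f (cst (unitR A)))).
Proof.
have E := ax_par_scalar_r HT f p.
rewrite -scalcr -scalcl -E castDE castCE; norm; done.
Qed.

Lemma par_scal_l (A B : Sy) (f : TR A B) (p : TR I I) :
  tpar p f = tscal (prob p) (tcomp (cst (esym (unitL B))) (tcomp f (cst (unitL A)))).
Proof.
have E := ax_par_scalar_l HT f p.
rewrite -scalcr -scalcl -E castDE castCE; norm; done.
Qed.


Lemma par_id_r (A B : Sy) (f : TR A B) :
  tpar f (tid I) = tcomp (cst (esym (unitR B))) (tcomp f (cst (unitR A))).
Proof. by rewrite par_scal_r (ax_prob_id HT) scal1. Qed.
Lemma par_id_l (A B : Sy) (f : TR A B) :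
  tpar (tid I) f = tcomp (cst (esym (unitL B))) (tcomp f (cst (unitL A))).
Proof. by rewrite par_scal_l (ax_prob_id HT) scal1. Qed.
Lemma par_assoc' (A B C D E F : Sy) (f : TR A B) (g : TR C D) (h : TR E F) :
  tpar f (tpar g h) = tcomp (cst (assocS B D F)) (tcomp (tpar (tpar f g) h) (cst (esym (assocS A C E)))).
Proof. by rewrite -(ax_par_assoc HT) castDE castCE compA'. Qed.

Definition sp (A B : Sy) (psi : TR I A) (phi : TR I B) : TR I (sprod A B) :=
  tcomp (tpar psi phi) (cst (esym (unitR I))).
Definition pe (A B : Sy) (a : TR A I) (b : TR B I) : TR (sprod A B) I :=
  castC (unitR I) (tpar a b).
Definition applyA (A B : Sy) (a : TR A I) (s : TR I (sprod A B)) : TR I B :=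
  castC (unitL B) (tcomp (tpar a (tid B)) s).
Definition app (A C : Sy) (al : TR I C) : TR A (sprod A C) :=
  tcomp (tpar (tid A) al) (cst (esym (unitR A))).

Lemma applyB_sp (A B : Sy) (b : TR B I) (psi : TR I A) (phi : TR I B) :
  applyB b (sp psi phi) = tscal (pairing b phi) psi.
Proof.
rewrite /applyB /sp castCE (ax_comp_assoc HT _ (tpar psi phi)) parC compidl par_scal_r.
norm; done.
Qed.

Lemma applyA_sp (A B : Sy) (a : TR A I) (psi : TR I A) (phi : TR I B) :
  applyA a (sp psi phi) = tscal (pairing a psi) phi.
Proof.
rewrite /applyA /sp castCE (ax_comp_assoc HT _ (tpar psi phi)) parC compidl par_scal_l.
norm; by rewrite /pairing.
Qed.

Lemma pe_applyB (A B : Sy) (a : TR A I) (b : TR B I) (s : TR I (sprod A B)) :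
  pairing (pe a b) s = pairing a (applyB b s).
Proof.
rewrite /pairing /pe /applyB !castCE.
have -> : tpar a b = tcomp (tpar a (tid I)) (tpar (tid A) b) by rewrite parC compidl compidr.
rewrite par_id_r; norm; done.
Qed.

Lemma pe_applyA (A B : Sy) (a : TR A I) (b : TR B I) (s : TR I (sprod A B)) :
  pairing (pe a b) s = pairing b (applyA a s).
Proof.
rewrite /pairing /pe /applyA !castCE.
have -> : tpar a b = tcomp (tpar (tid I) b) (tpar a (tid B)) by rewrite parC compidl compidr.
rewrite par_id_l; norm; done.
Qed.

Lemma pe_sp (A B : Sy) (a : TR A I) (b : TR B I) (psi : TR I A) (phi : TR I B) :
  pairing (pe a b) (sp psi phi) = pairing a psi * pairing b phi.
Proof.
by rewrite pe_applyB applyB_sp /pairing scalcr (ax_prob_scal HT) Rmult_comm.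
Qed.


Lemma par_idl_cst (A B C : Sy) (e : B = C) : tpar (tid A) (cst e) = cst (f_equal (sprod A) e).
Proof. rewrite -(cst_refl (erefl A)); exact: cst_par. Qed.
Lemma par_idr_cst (A B C : Sy) (e : B = C) : tpar (cst e) (tid A) = cst (f_equal (sprod^~ A) e).
Proof. rewrite -(cst_refl (erefl A)); exact: cst_par. Qed.

Lemma par_compl (A B C D : Sy) (f : TR A B) (g : TR B C) :
  tpar (tid D) (tcomp g f) = tcomp (tpar (tid D) g) (tpar (tid D) f).
Proof. by rewrite parC compidl. Qed.
Lemma par_compr (A B C D : Sy) (f : TR A B) (g : TR B C) :
  tpar (tcomp g f) (tid D) = tcomp (tpar g (tid D)) (tpar f (tid D)).
Proof. by rewrite parC compidl. Qed.

Lemma applyB_comp (A B B' : Sy) (b : TR B' I) (M : TR B B') (s : TR I (sprod A B)) :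
  applyB (tcomp b M) s = applyB b (tcomp (tpar (tid A) M) s).
Proof. by rewrite /applyB !castCE par_compl; norm. Qed.

Lemma applyB_assoc (A C D : Sy) (b : TR C I) (d : TR D I) (Phi : TR I (sprod (sprod A C) D)) :
  applyB (pe b d) (castC (assocS A C D) Phi) = applyB b (applyB d Phi).
Proof.
rewrite /applyB /pe !castCE par_compl par_idl_cst par_assoc'.
have -> : tpar (tpar (tid A) b) d = tcomp (tpar (tpar (tid A) b) (tid I)) (tpar (tid (sprod A C)) d).
  by rewrite parC compidl compidr.
rewrite par_id_r; norm; by rewrite (cst_pi _ (unitR A)).
Qed.


Lemma applyB_app (A C : Sy) (b : TR C I) (al : TR I C) (r : TR I A) :
  applyB b (tcomp (app A al) r) = tscal (pairing b al) r.
Proof.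
rewrite /applyB /app castCE; norm.
rewrite (ax_comp_assoc HT _ (tpar (tid A) al)) -par_compl par_scal_r; norm.
by rewrite /pairing.
Qed.

Lemma stateH (A B Q : Sy) (Psi : TR I (sprod A B)) (Phi : TR I Q) :
  tcomp (tpar (tid A) (tcomp (tpar (tid B) Phi) (cst (esym (unitR B))))) Psi
  = castC (assocS A B Q) (sp Psi Phi).
Proof.
rewrite par_compl par_idl_cst par_assoc' (ax_par_id HT) /sp castCE.
have -> : tpar Psi Phi = tcomp (tpar (tid (sprod A B)) Phi) (tpar Psi (tid I)).
  by rewrite parC compidl compidr.
rewrite par_id_r; norm.
by rewrite (cst_pi _ (esym (unitR (sprod A B)))).
Qed.


Lemma rsum_nonneg (X : finType) (P : pred X) (F : X -> R) :
  (forall x, P x -> 0 <= F x) -> 0 <= \big[Rplus/0]_(x | P x) F x.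
Proof.
move=> h; apply: (big_ind (fun r => 0 <= r)) => //; [lra | move=> ? ? ? ?; lra].
Qed.

Lemma rsum0_each (X : finType) (P : pred X) (F : X -> R) (x0 : X) :
  (forall x, P x -> 0 <= F x) -> \big[Rplus/0]_(x | P x) F x = 0 -> P x0 -> F x0 = 0.
Proof.
move=> h hs hx0; move: hs; rewrite (bigD1 x0) //=.
have := rsum_nonneg (P := fun x => P x && (x != x0)) (F := F) (fun x hx => h x (andP hx).1).
have := h x0 hx0; lra.
Qed.

Lemma prob_deffI : prob (deff I) = 1.
Proof.
have := ax_prob_test HT (det_deff I); rewrite rsumE (big_pred1 tt) //.
Qed.

Lemma pairing_tsum (A : Sy) (X : finType) (P : pred X) (a : X -> TR A I) (r : TR I A) :
  pairing (tsum P a) r = \big[Rplus/0]_(x | P x) pairing (a x) r.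
Proof.
rewrite /pairing -prob_tsum (tsum_map P a (L := fun x => tcomp x r)) //.
- by move=> x y; rewrite (ax_comp_addl HT).
- exact: comp0l.
Qed.

Lemma pairing0 (A : Sy) (a : TR A I) : pairing a tzero = 0.
Proof. by rewrite /pairing comp0r prob0. Qed.

Lemma state_zero (B : Sy) (s : TR I B) : isTrans s -> pairing (deff B) s = 0 -> s = tzero.
Proof.
move=> hs he; apply: (ax_state_ext HT) => a ha; rewrite pairing0.
move/(ax_trans_test HT): ha => [L [atst [l0 [Hat <-]]]].
have hsum := test_sum_deff l0 Hat.
have : \big[Rplus/0]_(l | predT l) pairing (atst l) s = 0 by rewrite -pairing_tsum hsum.
move/rsum0_each; apply => // l _.
by case: (pairing_range (test_trans l Hat) hs).
Qed.

Lemma pe_addl (A B : Sy) (a a' : TR A I) (b : TR B I) : pe (tadd a a') b = tadd (pe a b) (pe a' b).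
Proof. by rewrite /pe !castCE (ax_par_addl HT) (ax_comp_addr HT). Qed.
Lemma pe0l (A B : Sy) (b : TR B I) : pe (@tzero T A I) b = tzero.
Proof. by rewrite /pe castCE par0l comp0r. Qed.

Lemma test_zero (A B : Sy) (Y : finType) (g : Y -> TR A B) (y0 : Y) :
  isTest g -> tcomp (deff B) (g y0) = deff A -> forall y, y != y0 -> g y = tzero.
Proof.
move=> Hg H0.
have Hef : isTest (fun y => tcomp (deff B) (g y)) by apply: test_detl Hg (det_deff B).
have hs := test_sum_deff y0 Hef.
have hrest : tsum (fun y => y != y0) (fun y => tcomp (deff B) (g y)) = tzero.
  apply: (@addIr _ _ (tcomp (deff B) (g y0))); rewrite addr0.
  move: hs; rewrite !tsumE (bigD1 y0) //= => ->; by rewrite H0.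
move=> y1 hy1; apply: (ax_trans_ext HT) => S psi hpsi.
rewrite par0l comp0l.
move/(ax_trans_test HT): (hpsi) => [Z [pt [z0 [Hpt Hz0]]]].
have Hsig : isTest (fun p : Z * Y => tcomp (tpar (g p.2) (tid S)) (pt p.1)).
  exact: test_seq Hpt (test_par_detr Hg (det_id S)).
have Htr y : isTrans (tcomp (tpar (g y) (tid S)) psi).
  by rewrite -Hz0; exact: (test_trans (z0, y) Hsig).
apply: state_zero => //.
have E y : pairing (deff (sprod B S)) (tcomp (tpar (g y) (tid S)) psi)
           = pairing (pe (tcomp (deff B) (g y)) (deff S)) psi.
  rewrite (ax_deff_prod HT) /pairing /pe !castCE; norm.
  by rewrite (ax_comp_assoc HT _ (tpar (g y) (tid S))) parC compidr.
apply: (@rsum0_each _ (fun y => y != y0) (fun y => pairing (deff (sprod B S)) (tcomp (tpar (g y) (tid S)) psi))) => //.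
- by move=> y _; case: (pairing_range (det_trans (det_deff _)) (Htr y)).
- under eq_bigr => y _ do rewrite E.
  rewrite -pairing_tsum.
  rewrite -(tsum_map (fun y => y != y0) (fun y => tcomp (deff B) (g y)) (L := fun x => pe x (deff S))).
  + by rewrite hrest pe0l /pairing comp0l prob0.
  + by move=> ? ?; rewrite pe_addl.
  + exact: pe0l.
Qed.


Lemma channel_det (A B : Sy) (V : TR A B) : isChannel V -> det V.
Proof.
move=> [htr hch]; move/(ax_trans_test HT): htr => [Y [g [y0 [Hg Hy0]]]].
have := ax_test_coarse HT (h := fun _ => tt) Hg (fun y => ex_intro _ y0 (match y with tt => erefl end)).
apply: test_ext => -[]; rewrite tsumE (bigD1 y0) //= big1 ?addr0 //.
move=> y hy; apply: (test_zero (y0 := y0) Hg) => //; by rewrite Hy0.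
Qed.

Lemma det_normalized (A : Sy) (r : TR I A) : det r -> normalized r.
Proof.
move=> h; split; first exact: det_trans.
by rewrite /pairing (det_channel h) prob_deffI.
Qed.

Lemma normalized_det (A : Sy) (r : TR I A) : normalized r -> det r.
Proof.
move=> [htr hn]; apply: channel_det; split => //.
apply: (ax_prob_inj HT); by rewrite prob_deffI.
Qed.

Lemma pairing_scal (A : Sy) (a : TR A I) r (s : TR I A) : pairing a (tscal r s) = r * pairing a s.
Proof. by rewrite /pairing scalcr (ax_prob_scal HT). Qed.

Lemma castC_comp (A B C C' : Sy) (e : C = C') (g : TR B C) (f : TR A B) :
  castC e (tcomp g f) = tcomp (castC e g) f.
Proof. by rewrite !castCE compA'. Qed.

Lemma pure_cast (A B : Sy) (e : A = B) (s : TR I A) : pure s -> pure (castC e s).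
Proof. by case: _ / e. Qed.

Lemma pure_rev (S1 S2 : Sy) (s : TR I S1) (V : TR S1 S2) (W : TR S2 S1) :
  pure s -> det V -> det W -> tcomp W V = tid S1 -> tcomp V W = tid S2 -> pure (tcomp V s).
Proof.
move=> [hs hat] hV hW hWV hVW; split.
  move/(ax_trans_test HT): hs => [Z [f [z [Hf <-]]]].
  exact: (test_trans z (test_detl Hf hV)).
move=> D [Y [f [Y0 [Hf [HC [j [Hj ->]]]]]]].
have : refines (tcomp W (f j)) s.
  exists Y, (fun y => tcomp W (f y)), Y0; split; first exact: test_detl Hf hW.
  split; last by exists j.
  rewrite -(tsum_map Y0 f (L := tcomp W)); last exact: comp0r.
    by rewrite -HC (ax_comp_assoc HT) hWV compidl.
  by move=> ? ?; rewrite (ax_comp_addr HT).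
move/hat => [l [hl he]]; exists l; split => //.
by rewrite -[f j]compidl -hVW compA' he scalcr.
Qed.

Lemma trans_scal (A B : Sy) (C : TR A B) k : isTrans C -> 0 <= k <= 1 -> isTrans (tscal k C).
Proof.
move=> hC hk.
have [p hp] := ax_prob_surj HT k.
have : isTrans p by apply/(ax_prob_trans HT); rewrite hp.
move/(ax_trans_test HT) => [Xq [q [x0 [Hq Hx0]]]].
move/(ax_trans_test HT): hC => [Y [f [y0 [Hf Hy0]]]].
have Ht := test_detr (det_cst (esym (unitR A)))
             (test_detl (ax_test_par HT Hf Hq) (det_cst (unitR B))).
have := test_trans (y0, x0) Ht => /=.
by rewrite Hy0 Hx0 par_scal_r hp; norm.
Qed.

Lemma refine_map (S S' : Sy) (Y L : finType) (tau : Y -> TR I S) (Y0 : pred Y) (k : Y)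
  (M : L -> TR S S') (w : TR I S') :
  isTest tau -> Y0 k -> isTest M -> pure w -> tcomp (tsum predT M) (tsum Y0 tau) = w ->
  forall l, exists lam, 0 <= lam <= 1 /\ tcomp (M l) (tau k) = tscal lam w.
Proof.
move=> Htau Hk HM [_ hat] Hw l; apply: hat.
exists (prod Y L), (fun p => tcomp (M p.2) (tau p.1)), (fun p => Y0 p.1).
split; first exact: test_seq.
split; last by exists (k, l).
have E1 : tcomp (tsum predT M) (tsum Y0 tau) = tsum Y0 (fun y => tcomp (tsum predT M) (tau y)).
  apply: tsum_map; [by move=> ? ?; rewrite (ax_comp_addr HT) | exact: comp0r].
have E2 y : tcomp (tsum predT M) (tau y) = tsum predT (fun l => tcomp (M l) (tau y)).
  apply: (tsum_map predT M (L := fun x => tcomp x (tau y))); [by move=> ? ?; rewrite (ax_comp_addl HT) | exact: comp0l].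
rewrite -Hw E1 tsumE (eq_bigr _ (fun y _ => E2 y)).
under eq_bigr => y _ do rewrite tsumE.
rewrite pair_big tsumE; apply: eq_bigl => p; by rewrite andbT.
Qed.


Lemma tsum_compl (A B C : Sy) (X : finType) (P : pred X) (g : TR B C) (f : X -> TR A B) :
  tcomp g (tsum P f) = tsum P (fun x => tcomp g (f x)).
Proof. apply: tsum_map; [by move=> ? ?; rewrite (ax_comp_addr HT) | exact: comp0r]. Qed.
Lemma tsum_compr (A B C : Sy) (X : finType) (P : pred X) (g : TR A B) (f : X -> TR B C) :
  tcomp (tsum P f) g = tsum P (fun x => tcomp (f x) g).
Proof. apply: (tsum_map P f (L := fun x => tcomp x g)); [by move=> ? ?; rewrite (ax_comp_addl HT) | exact: comp0l]. Qed.
Lemma tsum_parl (A B C D : Sy) (X : finType) (P : pred X) (g : TR C D) (f : X -> TR A B) :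
  tpar (tsum P f) g = tsum P (fun x => tpar (f x) g).
Proof. apply: (tsum_map P f (L := fun x => tpar x g)); [by move=> ? ?; rewrite (ax_par_addl HT) | exact: par0l]. Qed.
Lemma tsum_parr (A B C D : Sy) (X : finType) (P : pred X) (g : TR C D) (f : X -> TR A B) :
  tpar g (tsum P f) = tsum P (fun x => tpar g (f x)).
Proof. apply: (tsum_map P f (L := fun x => tpar g x)); [by move=> ? ?; rewrite (ax_par_addr HT) | exact: par0r]. Qed.

Lemma pure_prod (A B : Sy) (psi : TR I A) (phi : TR I B) :
  normalized psi -> pure psi -> normalized phi -> pure phi -> pure (sp psi phi).
Proof.
move=> hn1 hp1 hn2 hp2.
have dpsi := normalized_det hn1; have dphi := normalized_det hn2.
have dO : det (sp psi phi) := det_comp (det_cst _) (det_par dpsi dphi).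
split; first exact: det_trans dO.
move=> D [Y [tau [Y0 [Htau [HO [k [Hk ->]]]]]]].
have hB : forall b, isTrans b -> exists lam, 0 <= lam <= 1 /\ applyB b (tau k) = tscal lam psi.
  move=> b /(ax_trans_test HT) [L [bt [l0 [Hbt <-]]]].
  have Heq : tcomp (tsum predT (fun l => tcomp (cst (unitR A)) (tpar (tid A) (bt l)))) (tsum Y0 tau) = psi.
    rewrite -HO -tsum_compl -tsum_parr (test_sum_deff l0 Hbt) compA'.
    have := applyB_sp (deff B) psi phi; rewrite /applyB castCE => ->.
    by rewrite hn2.2 scal1.
  have [lam [hl h]] := refine_map Htau Hk
    (test_detl (test_par_detl (det_id A) Hbt) (det_cst (unitR A))) hp1 Heq l0.
  exists lam; split => //.
  by rewrite /applyB castCE -compA' h.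
have hA : forall a, isTrans a -> exists lam, 0 <= lam <= 1 /\ applyA a (tau k) = tscal lam phi.
  move=> a /(ax_trans_test HT) [L [atst [l0 [Hat <-]]]].
  have Heq : tcomp (tsum predT (fun l => tcomp (cst (unitL B)) (tpar (atst l) (tid B)))) (tsum Y0 tau) = phi.
    rewrite -HO -tsum_compl -tsum_parl (test_sum_deff l0 Hat) compA'.
    have := applyA_sp (deff A) psi phi; rewrite /applyA castCE => ->.
    by rewrite hn1.2 scal1.
  have [lam [hl h]] := refine_map Htau Hk
    (test_detl (test_par_detr Hat (det_id B)) (det_cst (unitL B))) hp2 Heq l0.
  exists lam; split => //.
  by rewrite /applyA castCE -compA' h.
have [mu [hmu hmuE]] := hA (deff A) (det_trans (det_deff A)).
exists mu; split => //.
apply: (ax_local_discr HT).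
- exact: test_trans k Htau.
- apply: trans_scal => //; exact: det_trans dO.
move=> a b ha hb.
have E s : prob (castC (unitR I) (tcomp (tpar a b) s)) = pairing (pe a b) s.
  by rewrite /pairing /pe castC_comp.
rewrite !E.
have [lb [_ hlb]] := hB b hb.
have Hl : lb = mu * pairing b phi.
  have := pe_applyB (deff A) b (tau k); rewrite pe_applyA hmuE hlb !pairing_scal hn1.2.
  lra.
rewrite pairing_scal pe_sp pe_applyB hlb pairing_scal Hl; ring.
Qed.


Lemma applyB_scal (A B : Sy) (b : TR B I) r (s : TR I (sprod A B)) :
  applyB b (tscal r s) = tscal r (applyB b s).
Proof. by rewrite /applyB !castCE !scalcr. Qed.

Lemma det_sp (A B : Sy) (psi : TR I A) (phi : TR I B) : det psi -> det phi -> det (sp psi phi).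
Proof. move=> h1 h2; exact: det_comp (det_cst _) (det_par h1 h2). Qed.

Lemma det_castC (A B B' : Sy) (e : B = B') (f : TR A B) : det f -> det (castC e f).
Proof. move=> h; rewrite castCE; exact: det_comp h (det_cst e). Qed.

Lemma marginal_assoc_sp (A B Q : Sy) (Psi : TR I (sprod A B)) (Phi : TR I Q) :
  normalized Phi ->
  marginal (castC (assocS A B Q) (sp Psi Phi)) = marginal Psi.
Proof.
move=> hn; rewrite /marginal (ax_deff_prod HT) -/(pe (deff B) (deff Q)) applyB_assoc.
by rewrite applyB_sp hn.2 scal1.
Qed.

Lemma transfer (A B P : Sy) (X : finType) (rho : TR I A) (Psi : TR I (sprod A B))
  (Phi : TR I (sprod A P)) (bp : X -> TR P I) (rhos : X -> TR I A) :
  PurificationPostulate T ->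
  isPurification rho Psi -> isPurification rho Phi -> isTest bp ->
  (forall x, applyB (bp x) Phi = rhos x) ->
  exists b : X -> TR B I, isTest b /\ forall x, rhos x = applyB (b x) Psi.
Proof.
move=> HP [hnPsi [hpPsi hmPsi]] [hnPhi [hpPhi hmPhi]] Hbp Hst.
have dPsi := normalized_det hnPsi; have dPhi := normalized_det hnPhi.
pose Q := sprod A P; pose R := sprod A B.
pose S1 := castC (assocS A B Q) (sp Psi Phi).
pose S2' := castC (assocS A P R) (sp Phi Psi).
pose W : TR (sprod P R) (sprod B Q) :=
  tcomp (cst (assocS B A P)) (tcomp (tpar (tswap A B) (tid P)) (tswap P R)).
pose W' : TR (sprod B Q) (sprod P R) :=
  tcomp (tswap R P) (tcomp (tpar (tswap B A) (tid P)) (cst (esym (assocS B A P)))).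
have dW : det W.
  apply: (det_comp _ (det_cst _)); apply: (det_comp (det_swap _ _)).
  exact: det_par (det_swap _ _) (det_id _).
have dW' : det W'.
  apply: (det_comp _ (det_swap _ _)); apply: (det_comp (det_cst _)).
  exact: det_par (det_swap _ _) (det_id _).
have hW'W : tcomp W' W = tid _.
  rewrite /W /W'; norm.
  rewrite (ax_comp_assoc HT (tswap P R)) -par_compr (ax_swap_inv HT) (ax_par_id HT) compidl.
  exact: (ax_swap_inv HT).
have hWW' : tcomp W W' = tid _.
  rewrite /W /W'; norm.
  rewrite (ax_comp_assoc HT _ (tswap R P) (tswap P R)) (ax_swap_inv HT) compidl.
  rewrite (ax_comp_assoc HT _ (tpar (tswap B A) (tid P))) -par_compr (ax_swap_inv HT) (ax_par_id HT) compidl.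
  by norm.
pose S2 := tcomp (tpar (tid A) W) S2'.
have P1 : isPurification rho S1.
  split; first by apply: det_normalized; apply: det_castC; exact: det_sp.
  split; first by apply: pure_cast; exact: pure_prod.
  by rewrite marginal_assoc_sp.
have P2 : isPurification rho S2.
  split.
    apply: det_normalized; apply: det_comp; last exact: det_par (det_id _) dW.
    apply: det_castC; exact: det_sp.
  split.
    apply: (pure_rev (W := tpar (tid A) W')).
    - by apply: pure_cast; exact: pure_prod.
    - exact: det_par (det_id _) dW.
    - exact: det_par (det_id _) dW'.
    - by rewrite -par_compl hW'W (ax_par_id HT).
    - by rewrite -par_compl hWW' (ax_par_id HT).
  rewrite /S2 /marginal -applyB_comp (det_channel dW).
  by change (marginal S2' = rho); rewrite /S2' marginal_assoc_sp.
have [U [[[hUt hUc] [Wu [hWuc [hWuU hUWu]]]] HS]] := HP.2 _ _ _ _ (ex_intro _ rho (conj P2 P1)).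
have dWu := channel_det hWuc.
pose E x := tcomp (pe (bp x) (deff R)) (tcomp W' Wu).
have HE : isTest E.
  apply: test_detr; first exact: det_comp dWu dW'.
  apply: (test_ext (f := fun x => tcomp (cst (unitR I)) (tpar (bp x) (deff R)))).
    by move=> x; rewrite /pe castCE.
  apply: test_detl (det_cst _); exact: test_par_detr Hbp (det_deff _).
have HES x : applyB (E x) S1 = rhos x.
  rewrite /E applyB_comp par_compl compA' HS.
  rewrite -[X in tcomp _ X]compA' -par_compl hWuU (ax_par_id HT) compidl.
  rewrite /S2 -compA' -par_compl hW'W (ax_par_id HT) compidl.
  by rewrite applyB_assoc applyB_sp hnPsi.2 scal1 Hst.
exists (fun x => tcomp (E x) (tcomp (tpar (tid B) Phi) (cst (esym (unitR B))))).
split.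
  apply: test_detr HE; exact: det_comp (det_cst _) (det_par (det_id _) dPhi).
by move=> x; rewrite applyB_comp stateH HES.
Qed.


Lemma pe_test (A B : Sy) (X Y : finType) (a : X -> TR A I) (b : Y -> TR B I) :
  isTest a -> isTest b -> isTest (fun p : X * Y => pe (a p.1) (b p.2)).
Proof.
move=> ha hb.
apply: (test_ext (f := fun p : X * Y => tcomp (cst (unitR I)) (tpar (a p.1) (b p.2)))).
  by move=> p; rewrite /pe castCE.
apply: test_detl (det_cst _); exact: (ax_test_par HT ha hb).
Qed.

Lemma sum_delta (Y : finType) (P : pred Y) (q : Y) :
  \big[Rplus/0]_(p | P p) (if p == q then 1 else 0) = if P q then 1 else 0.
Proof.
case: (boolP (P q)) => hq.
  rewrite (bigD1 q) //= eqxx big1 ?Rplus_0_r // => p /andP [_ /negbTE ->] //.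
rewrite big1 // => p hp; case: eqP => // hpq; move: hq; by rewrite -hpq hp.
Qed.

Lemma dist_ord n : exists (C : Sy) (al : 'I_n.+1 -> TR I C) (c : 'I_n.+1 -> TR C I),
  (forall i, det (al i)) /\ isTest c /\
  forall i j, pairing (c j) (al i) = if i == j then 1 else 0.
Proof.
have [A0 [rb [ab [hrb [Hab hd]]]]] := ax_perf_dist HT.
elim: n => [|n [C [al [c [hal [Hc hc]]]]]].
  exists A0, (fun _ => rb false), (fun _ => deff A0); split.
    move=> _; exact: normalized_det.
  split.
    apply: (test_reindex (f := fun _ : unit => deff A0) (g := fun _ => tt) (h := fun _ => ord0)).
    - by move=> i; rewrite (ord1 i).
    - by case.
    - exact: det_deff.
  by move=> i j; rewrite (ord1 i) (ord1 j) eqxx; exact: (hrb false).2.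
pose h (p : 'I_n.+1 * bool) : 'I_n.+2 := if p.2 then ord_max else lift ord_max p.1.
pose q (i : 'I_n.+2) : 'I_n.+1 * bool :=
  match unlift ord_max i with Some j => (j, false) | None => (ord0, true) end.
have hq i : h (q i) = i.
  rewrite /h /q; case: unliftP => [j -> | ->] //=.
exists (sprod C A0), (fun i => sp (al (q i).1) (rb (q i).2)).
exists (fun i => tsum (fun p => h p == i) (fun p => pe (c p.1) (ab p.2))).
split; first by move=> i; apply: det_sp => //; exact: normalized_det.
split.
  apply: (ax_test_coarse HT); first exact: pe_test.
  by move=> y; exists (q y).
move=> i j; rewrite pairing_tsum.
under eq_bigr => p _ do rewrite pe_sp hc hd.
have -> : \big[Rplus/0]_(p | h p == j)
    ((if (q i).1 == p.1 then 1 else 0) * (if (q i).2 == p.2 then 1 else 0))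
  = \big[Rplus/0]_(p | h p == j) (if p == q i then 1 else 0).
  apply: eq_bigr => -[p1 p2] _.
  case: (q i) => q1 q2 /=; rewrite xpair_eqE [p1 == q1]eq_sym [p2 == q2]eq_sym.
  case: (q1 == p1); case: (q2 == p2) => /=; lra.
by rewrite sum_delta hq.
Qed.


Lemma dist_X (X : finType) (x0 : X) : exists (C : Sy) (al : X -> TR I C) (c : X -> TR C I),
  (forall i, det (al i)) /\ isTest c /\
  forall i j, pairing (c j) (al i) = if i == j then 1 else 0.
Proof.
have hpos : (0 < #|X|)%N by apply/card_gt0P; exists x0.
have e : #|X| = (#|X|.-1).+1 by rewrite prednK.
have [C [al [c [hal [Hc hc]]]]] := dist_ord (#|X|.-1).
pose f (x : X) : 'I_(#|X|.-1).+1 := cast_ord e (enum_rank x).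
pose g (i : 'I_(#|X|.-1).+1) : X := enum_val (cast_ord (esym e) i).
have fK : cancel f g by move=> x; rewrite /f /g cast_ordK enum_rankK.
have gK : cancel g f by move=> i; rewrite /f /g enum_valK cast_ordKV.
exists C, (fun x => al (f x)), (fun x => c (f x)); split => //.
split; first exact: (test_reindex (f := c) fK gK Hc).
by move=> i j; rewrite hc (inj_eq (can_inj fK)).
Qed.

Lemma applyB_add (A B : Sy) (b : TR B I) (s s' : TR I (sprod A B)) :
  applyB b (tadd s s') = tadd (applyB b s) (applyB b s').
Proof. by rewrite /applyB !castCE !(ax_comp_addr HT). Qed.
Lemma applyB0 (A B : Sy) (b : TR B I) : applyB b (@tzero T I (sprod A B)) = tzero.
Proof. by rewrite /applyB castCE !comp0r. Qed.

Lemma tsum_delta (A : Sy) (X : finType) (r : X -> TR I A) (x : X) (d : X -> R) :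
  (forall y, d y = if y == x then 1 else 0) ->
  tsum predT (fun y => tscal (d y) (r y)) = r x.
Proof.
move=> hd; rewrite tsumE (bigD1 x) //= hd eqxx scal1 big1 ?addr0 //.
by move=> y /negbTE hy; rewrite hd hy scal0.
Qed.

Lemma main_sec (HP : PurificationPostulate T)
  (A : Sys T) (X : finType) (rhos : X -> TR sI A) (Hrhos : isTest rhos) :
  (forall (B : Sys T) (Psi : TR sI (sprod A B)),
     isPurification (tsum predT rhos) Psi ->
     exists b : X -> TR B sI, isTest b /\ forall i, rhos i = applyB (b i) Psi)
  /\
  (exists (B : Sys T) (Psi : TR sI (sprod A B)),
     isPurification (tsum predT rhos) Psi /\
     exists b : X -> TR B sI,
       isTest b /\ (forall i, rhos i = applyB (b i) Psi) /\
       exists sigma : X -> TR sI B,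
         (forall i, normalized (sigma i)) /\
         forall i j, pairing (b j) (sigma i) = (if i == j then 1 else 0)%R).
Proof.
have [x0 _] : exists x0 : X, True.
  case: (pickP (@predT X)) => [x0 _|h0]; first by exists x0.
  have := ax_prob_test HT (test_detl Hrhos (det_deff A)).
  rewrite rsumE big_pred0; [lra | by move=> x; have := h0 x].
have [C [al [c [hal [Hc hc]]]]] := dist_X x0.
have hal1 i : pairing (deff C) (al i) = 1 by have := det_normalized (hal i) => -[].
pose Sg := tsum predT (fun x => tcomp (app A (al x)) (rhos x)).
have dSg : det Sg.
  have Hf : isTest (fun x => tcomp (app A (al x)) (rhos x)).
    have := ax_test_cond HT (Y := fun _ => unit) (g := fun x (_ : unit) => app A (al x)) Hrhos
      (fun x => det_comp (det_cst _) (det_par (det_id A) (hal x))).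
    move/(test_reindex (g := fun x : X => existT (fun _ => unit) x tt)
                       (h := fun s : {x : X & unit} => tag s)).
    by apply => //; case=> ? [].
  have := ax_test_coarse HT (h := fun _ => tt) Hf (fun y => ex_intro _ x0 (match y with tt => erefl end)).
  apply: test_ext => -[]; rewrite /Sg !tsumE; exact: eq_bigl.
have [D [Phi [hnPhi [hpPhi hmPhi]]]] := HP.1 _ Sg (det_normalized dSg).
have dPhi := normalized_det hnPhi.
pose Psi2 := castC (assocS A C D) Phi.
pose bp x := pe (c x) (deff D).
have Hbp : isTest bp.
  have := pe_test Hc (det_deff D).
  move/(test_reindex (g := fun x : X => (x, tt)) (h := fun p : X * unit => p.1)).
  by apply => //; case=> ? [].
have margSg (b : TR C I) : applyB b Sg = tsum predT (fun y => tscal (pairing b (al y)) (rhos y)).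
  rewrite /Sg (tsum_map predT _ (L := applyB b)); last exact: applyB0.
    by rewrite !tsumE; apply: eq_bigr => y _; rewrite applyB_app.
  exact: applyB_add.
have Hst x : applyB (bp x) Psi2 = rhos x.
  rewrite /bp /Psi2 applyB_assoc.
  change (applyB (c x) (marginal Phi) = rhos x).
  rewrite hmPhi margSg; apply: tsum_delta => y; exact: hc.
have Pur2 : isPurification (tsum predT rhos) Psi2.
  split; first by apply: det_normalized; exact: det_castC.
  split; first exact: pure_cast.
  rewrite /marginal (ax_deff_prod HT) -/(pe (deff C) (deff D)) applyB_assoc.
  change (applyB (deff C) (marginal Phi) = tsum predT rhos).
  rewrite hmPhi margSg !tsumE; apply: eq_bigr => y _; by rewrite hal1 scal1.
split.
  move=> B Psi hPsi; exact: (transfer HP hPsi Pur2 Hbp Hst).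
exists (sprod C D), Psi2; split => //.
exists bp; split => //; split; first by move=> x; rewrite Hst.
pose eta := applyA (deff (sprod A C)) Phi.
have deta : det eta.
  apply: det_castC; apply: det_comp dPhi _; exact: det_par (det_deff _) (det_id _).
exists (fun i => sp (al i) eta); split.
  by move=> i; apply: det_normalized; exact: det_sp.
move=> i j; rewrite /bp pe_sp hc.
have := det_normalized deta => -[_ ->]; by rewrite Rmult_1_r.
Qed.

End Dev.

Theorem mainTheorem3 (T : OPTData) (HT : OPTAxioms T)
  (HP : PurificationPostulate T)
  (A : Sys T) (X : finType) (rhos : X -> TR sI A) (Hrhos : isTest rhos) :
  (forall (B : Sys T) (Psi : TR sI (sprod A B)),
     isPurification (tsum predT rhos) Psi ->
     exists b : X -> TR B sI, isTest b /\ forall i, rhos i = applyB (b i) Psi)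
  /\
  (exists (B : Sys T) (Psi : TR sI (sprod A B)),
     isPurification (tsum predT rhos) Psi /\
     exists b : X -> TR B sI,
       isTest b /\ (forall i, rhos i = applyB (b i) Psi) /\
       exists sigma : X -> TR sI B,
         (forall i, normalized (sigma i)) /\
         forall i j, pairing (b j) (sigma i) = (if i == j then 1 else 0)%R).
Proof. exact: main_sec. Qed.
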